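(* Let $A$ and $B$ be strings with LZ77 parses $Z_A$ and $Z_B$, viewed as strings of tuples. Suppose Alice knows $A$, Bob knows $B$, and the length $\mathrm{LCP}(Z_A,Z_B)$ of the longest common prefix of $Z_A$ and $Z_B$ is known. Then the parties can determine $\ell=\mathrm{LCP}(A,B)$ using $O(1)$ rounds and $O(\lg\ell)$ communication.
   Context: $\mathrm{LCP}(X,Y)$ is the length of the longest common prefix of $X$ and $Y$. The LZ77 parse (without self-references) of a string $S$ divides $S$ greedily from left to right into phrases. The $i$-th phrase, starting at $u_i$, is the longest substring with an earlier occurrence (its source) starting left of $u_i$ and not overlapping the phrase, followed by the next symbol. It is represented as the tuple $(s_i,l_i,\alpha_i)$: source start, source length, and next symbol. A parse is a string over the alphabet of such tuples. Both parties use the same deterministic parsing rule (e.g. leftmost source), so equal strings get equal parses. *)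

(* Defs.v *)
From mathcomp Require Import all_boot.
Set Implicit Arguments. Unset Strict Implicit. Unset Printing Implicit Defensive.

Fixpoint lcp (T : eqType) (x y : seq T) : nat :=
  match x, y with
  | a :: x', b :: y' => if a == b then (lcp x' y').+1 else 0
  | _, _ => 0
  end.

Section LZ.
Variable T : eqType.
Implicit Types (S : seq T).

Definition occ S (s u L : nat) : bool :=
  take L (drop s S) == take L (drop u S).

Definition is_source S (u L s : nat) : bool := (s + L <= u) && occ S s u L.

(* length of the longest substring at u having an earlier non-overlapping
   occurrence and still followed by a next symbol (u + L < size S) *)
Definition phrase_len S (u : nat) : nat :=
  \max_(L < size S - u | [exists s : 'I_u.+1, is_source S u L s]) (L : nat).

(* leftmost source (0 when the length is 0) *)
Definition phrase_src S (u : nat) : nat :=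
  find (is_source S u (phrase_len S u)) (iota 0 u.+1).

Fixpoint lz_from (fuel u : nat) S : seq (nat * nat * T) :=
  match fuel with
  | 0 => [::]
  | f.+1 =>
    match drop (u + phrase_len S u) S with
    | a :: _ => (phrase_src S u, phrase_len S u, a)
                  :: lz_from f (u + phrase_len S u).+1 S
    | [::] => [::]
    end
  end.

(* the LZ77 parse of S as a string of tuples (source start, length, symbol) *)
Definition lz77 S : seq (nat * nat * T) := lz_from (size S) 0 S.
End LZ.

(* Round i (i = 0, 1, ...) is spoken by Alice if i is even, by Bob if odd;
   each message depends only on the speaker's input and the transcript. *)
Record protocol (IA IB O : Type) := Protocol {
  rounds : nat;
  msg_A : IA -> seq (seq bool) -> seq bool;
  msg_B : IB -> seq (seq bool) -> seq bool;
  out_A : IA -> seq (seq bool) -> O;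
  out_B : IB -> seq (seq bool) -> O
}.

Definition step (IA IB O : Type) (P : protocol IA IB O) (a : IA) (b : IB)
    (tr : seq (seq bool)) (i : nat) : seq (seq bool) :=
  rcons tr (if odd i then msg_B P b tr else msg_A P a tr).

Definition transcript (IA IB O : Type) (P : protocol IA IB O) (a : IA) (b : IB)
  : seq (seq bool) := foldl (step P a b) [::] (iota 0 (rounds P)).

Definition comm_cost (tr : seq (seq bool)) : nat := sumn (map size tr).

(* Main.v *)
Require Import Defs.
From mathcomp Require Import all_boot.
From mathcomp Require Import zify.
Set Implicit Arguments. Unset Strict Implicit. Unset Printing Implicit Defensive.

Section Lcp.
Variable T : eqType.
Implicit Types x y : seq T.

Lemma lcp_size x y : lcp x y <= size x.
Proof. elim: x y => [|a x IH] [|b y] //=; case: (a == b) => //; exact: IH. Qed.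

Lemma lcp_sym x y : lcp x y = lcp y x.
Proof. elim: x y => [|a x IH] [|b y] //=; rewrite eq_sym; case: (b == a) => //; by rewrite IH. Qed.

Lemma take_lcp x y : take (lcp x y) x = take (lcp x y) y.
Proof.
elim: x y => [|a x IH] [|b y] //=; case: eqP => [<-|] //=; by rewrite IH.
Qed.

Lemma lcp_drop0 x y : lcp (drop (lcp x y) x) (drop (lcp x y) y) = 0.
Proof.
elim: x y => [|a x IH] [|b y] //=; case: eqP => [<-|/eqP ne] //=.
by rewrite (negbTE ne).
Qed.

Lemma lcp_take x y n : lcp x (take n y) = minn (lcp x y) n.
Proof.
elim: x y n => [|a x IH] [|b y] [|n] //=; case: (a == b) => //.
by rewrite IH minnSS.
Qed.

Lemma lcp_split x y p : take p x = take p y -> p <= size x ->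
  lcp x y = p + lcp (drop p x) (drop p y).
Proof.
elim: p x y => [|p IH] [|a x] [|b y] //=.
case=> -> /IH H /H ->; by rewrite eqxx.
Qed.

Lemma window (S1 S2 : seq T) u s L : s + L <= u -> take u S1 = take u S2 ->
  take L (drop s S1) = take L (drop s S2).
Proof.
move=> le E.
have H S : take L (drop s S) = take L (drop s (take u S)).
  by rewrite !take_drop take_takel // addnC.
by rewrite H E -H.
Qed.
End Lcp.

Section LZ2.
Variable T : eqType.
Implicit Types S A B : seq T.

Definition len1 (t : nat * nat * T) := (t.1.2).+1.

Lemma phrase_len_src S u : is_source S u (phrase_len S u) (phrase_src S u).
Proof.
have P0 : [exists s : 'I_u.+1, is_source S u (phrase_len S u) s].
  rewrite /phrase_len.
  apply: (big_ind (fun L => [exists s : 'I_u.+1, is_source S u L s])).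
  - apply/existsP; exists ord0; by rewrite /is_source /occ !take0 eqxx andbT.
  - move=> x y Hx Hy; rewrite /maxn; by case: ltnP.
  - by move=> i.
have H : has (is_source S u (phrase_len S u)) (iota 0 u.+1).
  case/existsP: P0 => s Hs; apply/hasP; exists (val s) => //.
  by rewrite mem_iota /= add0n ltn_ord.
move: (nth_find 0 H); rewrite nth_iota ?add0n //.
by move: H; rewrite has_find size_iota.
Qed.

Lemma phrase_len_max S u L s : L < size S - u -> s <= u -> is_source S u L s ->
  L <= phrase_len S u.
Proof.
move=> hL hs hsrc; rewrite /phrase_len.
apply: (@leq_bigmax_cond _ _ (fun i : 'I_(size S - u) => (i : nat)) (Ordinal hL)).
apply/existsP; have hs' : s < u.+1 by [].
by exists (Ordinal hs').
Qed.

Lemma src_down S u L L' s : L' <= L -> is_source S u L s -> is_source S u L' s.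
Proof.
rewrite /is_source /occ => h /andP [h1 /eqP h2]; apply/andP; split; first lia.
apply/eqP; by rewrite -[take L' (drop s S)](take_takel _ h) h2 take_takel.
Qed.

Lemma src_transfer S1 S2 u j L s : take (u + j) S1 = take (u + j) S2 -> L <= j ->
  is_source S1 u L s = is_source S2 u L s.
Proof.
move=> E0 hj.
have hle : u + L <= u + j by rewrite leq_add2l.
have E : take (u + L) S1 = take (u + L) S2.
  by rewrite -[LHS](take_takel _ hle) E0 take_takel.
rewrite /is_source /occ; case: (leqP (s + L) u) => //= h.
rewrite (window (s:=s) _ E) ?(window (s:=u) _ E) //; lia.
Qed.

Lemma phrase_len_lt S u : (phrase_len S u == 0) || (u + phrase_len S u < size S).
Proof.
rewrite /phrase_len.
apply: (big_ind (fun L => (L == 0) || (u + L < size S))) => //.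
- move=> x y Hx Hy; rewrite /maxn; by case: ltnP.
- move=> i _; apply/orP; right; have := ltn_ord i; lia.
Qed.

Lemma lz_from_S f u S : lz_from f.+1 u S =
  match drop (u + phrase_len S u) S with
  | a :: _ => (phrase_src S u, phrase_len S u, a) :: lz_from f (u + phrase_len S u).+1 S
  | [::] => [::]
  end.
Proof. by []. Qed.

Lemma lz_nil f u S : size S <= u -> lz_from f u S = [::].
Proof. case: f => //= f h; by rewrite drop_oversize // (leq_trans h) ?leq_addr. Qed.

Lemma lz_drop S n f u : drop n (lz_from f u S) =
  lz_from (f - n) (u + sumn (map len1 (take n (lz_from f u S)))) S.
Proof.
elim: n f u => [|n IH] f u; first by rewrite drop0 subn0 take0 /= addn0.
case: f => [|f] //=.
case E: (drop (u + phrase_len S u) S) => [|a r] /=.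
  rewrite addn0 lz_nil //.
  have := phrase_len_lt S u; case/orP => [/eqP h|h].
    by move: E; rewrite h addn0 => /(f_equal size); rewrite size_drop /= => /eqP; rewrite subn_eq0.
  by move: E => /(f_equal size); rewrite size_drop /=; lia.
by rewrite IH subSS /len1 /= addnA addnS.
Qed.

Lemma take_step S u L : take (u + L).+1 S =
  take u S ++ take L (drop u S) ++ take 1 (drop (u + L) S).
Proof. by rewrite -addnS takeD -addn1 takeD drop_drop addnC. Qed.

Lemma lz_common A B n fA fB u : take u A = take u B -> u <= size A ->
  n <= lcp (lz_from fA u A) (lz_from fB u B) ->
  take (u + sumn (map len1 (take n (lz_from fA u A)))) A =
  take (u + sumn (map len1 (take n (lz_from fA u A)))) B /\
  u + sumn (map len1 (take n (lz_from fA u A))) <= size A.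
Proof.
elim: n fA fB u => [|n IH] fA fB u Eu hu.
  by rewrite take0 /= addn0.
case: fA => [|fA] //; case: fB => [|fB]; first by case: (lz_from _ _ _).
rewrite !lz_from_S.
case EA: (drop (u + phrase_len A u) A) => [|a ra] //.
case EB: (drop (u + phrase_len B u) B) => [|b rb] //=.
case: ifP => // /eqP Et; rewrite ltnS => hn.
case: Et => Es EL Ea.
have hA := phrase_len_src A u; have hB := phrase_len_src B u.
rewrite -EL -Es in EB hn hB.
set sA := phrase_src A u in hA hB *; set LA := phrase_len A u in EA EB hA hB hn *.
have hsz : u + LA < size A.
  by move: EA => /(f_equal size); rewrite size_drop /=; lia.
have E1 : take (u + LA).+1 A = take (u + LA).+1 B.
  rewrite !take_step EA EB Ea Eu; congr (_ ++ _ ++ _).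
  move: hA hB => /andP [hA1 /eqP hA2] /andP [hB1 /eqP hB2].
  by rewrite -hA2 -hB2 (window hA1 Eu).
  by rewrite /= !take0.
have [IH1 IH2] := IH fA fB (u + LA).+1 E1 hsz hn.
by rewrite /len1 /= addnA addnS.
Qed.

End LZ2.

Section G3.
Variable T : eqType.
Implicit Types S A B : seq T.

Lemma sumn_len1 (s : seq (nat * nat * T)) : size s <= sumn (map (@len1 T) s).
Proof. elim: s => //= t s IH; by rewrite -add1n leq_add. Qed.

Lemma len_le S1 S2 p m : take (p + m) S1 = take (p + m) S2 -> m <= size S2 - p ->
  phrase_len S1 p < m -> phrase_len S2 p < m -> phrase_len S1 p <= phrase_len S2 p.
Proof.
move=> E hm h1 h2; rewrite leqNgt; apply/negP => h21.
have hs := phrase_len_src S1 p.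
have hsrc : is_source S1 p (phrase_len S2 p).+1 (phrase_src S1 p) by apply: src_down hs.
rewrite (src_transfer _ E) in hsrc; last lia.
have hle : phrase_src S1 p <= p by move: hs => /andP [hs1 _]; lia.
have hlt : (phrase_len S2 p).+1 < size S2 - p by lia.
by have := phrase_len_max hlt hle hsrc; rewrite ltnn.
Qed.

Definition pos S k := sumn (map (@len1 T) (take k (lz77 S))).

Lemma drop_lz S k : k <= size (lz77 S) -> drop k (lz77 S) = lz_from (size S - k) (pos S k) S.
Proof. by move=> _; rewrite /lz77 lz_drop add0n. Qed.

Lemma k_le_pos S k : k <= size (lz77 S) -> k <= pos S k.
Proof.
move=> h; rewrite /pos; apply: leq_trans (sumn_len1 _); by rewrite size_takel.
Qed.



Lemma g3 A B : let k := lcp (lz77 A) (lz77 B) in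
  take (pos A k) A = take (pos A k) B ->
  lcp (drop (pos A k) A) (drop (pos A k) B) <=
  maxn (phrase_len A (pos A k)) (phrase_len B (pos A k)).
Proof.
move=> k Ep.
have EpB : pos B k = pos A k by rewrite /pos /k take_lcp.
set p := pos A k in Ep EpB *.
set m := lcp (drop p A) (drop p B).
rewrite leqNgt; apply/negP => hm.
have hmA : m <= size A - p by rewrite -size_drop lcp_size.
have hmB : m <= size B - p by rewrite -size_drop /m lcp_sym lcp_size.
have Et : take (p + m) A = take (p + m) B by rewrite !takeD Ep /m take_lcp.
have hkA : k <= size (lz77 A) by rewrite /k lcp_size.
have hkB : k <= size (lz77 B) by rewrite /k lcp_sym lcp_size.
have kp : k <= p := k_le_pos hkA.
set LA := phrase_len A p in hm *; set LB := phrase_len B p in hm *.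
have hLA : LA < m by lia.
have hLB : LB < m by lia.
have EL : LA = LB.
  apply/eqP; rewrite eqn_leq; apply/andP; split.
    exact: (len_le Et).
  by apply: (len_le (esym Et)).
have Es : phrase_src A p = phrase_src B p.
  rewrite /phrase_src -/LA -/LB -EL; apply: eq_find => s.
  exact: (src_transfer s Et (ltnW hLA)).
have D0 := lcp_drop0 (lz77 A) (lz77 B).
rewrite -/k (drop_lz hkA) (drop_lz hkB) EpB -/p in D0.
have hA : size A - k = (size A - k).-1.+1 by lia.
have hB : size B - k = (size B - k).-1.+1 by lia.
rewrite hA hB !lz_from_S -/LA -/LB -EL -Es in D0.
have Et1 : take (p + LA).+1 A = take (p + LA).+1 B.
  by rewrite -[LHS](@take_takel _ _ (p + m)) ?Et ?take_takel //; lia.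
have := congr1 (drop (p + LA)) Et1.
rewrite -[(p + LA).+1]add1n -!take_drop.
case EA: (drop (p + LA) A) => [|a ra]; first by move: EA => /(f_equal size); rewrite size_drop /=; lia.
case EB: (drop (p + LA) B) => [|b rb]; first by move: EB => /(f_equal size); rewrite size_drop /=; lia.
rewrite /= !take0 => -[Eab].
by move: D0; rewrite EA EB /= Eab eqxx.
Qed.
End G3.

Fixpoint encf (f n : nat) : seq bool :=
  match f with
  | 0 => [::]
  | f.+1 => if n == 0 then [::] else odd n :: encf f n./2
  end.
Definition enc n := encf n n.
Definition dec (s : seq bool) : nat := foldr (fun (b : bool) acc => (b : nat) + acc.*2) 0 s.

Lemma dec_encf f n : n <= f -> dec (encf f n) = n.
Proof.
elim: f n => [|f IH] n h /=; first by case: n h.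
case: eqP => [->|ne] //=.
rewrite IH ?odd_double_half //.
have : n./2 < n by rewrite -divn2 ltn_Pdiv //; lia.
lia.
Qed.

Lemma dec_enc n : dec (enc n) = n.
Proof. exact: dec_encf. Qed.

Lemma size_encf f n k : n < 2 ^ k -> size (encf f n) <= k.
Proof.
elim: f n k => [|f IH] n k h //=.
case: eqP => // ne /=.
case: k h => [|k] h; first by rewrite expn0 in h; lia.
rewrite ltnS; apply: IH.
rewrite expnS in h; rewrite -divn2 ltn_divLR //; lia.
Qed.

Lemma size_enc n k : n < 2 ^ k -> size (enc n) <= k.
Proof. exact: size_encf. Qed.

Section Proto.
Variable T : eqType.

Definition vv (S : seq T) k L' s' := lcp (drop (pos S k) S) (take L' (drop s' S)).

Definition msg (j : nat) (x : seq T * nat) (tr : seq (seq bool)) : seq bool :=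
  let p := pos x.1 x.2 in
  if size tr < 2 then enc (phrase_len x.1 p)
  else if size tr < 4 then enc (phrase_src x.1 p)
  else enc (vv x.1 x.2 (dec (nth [::] tr (1 - j))) (dec (nth [::] tr (3 - j)))).

Definition outp (x : seq T * nat) (tr : seq (seq bool)) : nat :=
  pos x.1 x.2 + maxn (dec (nth [::] tr 4)) (dec (nth [::] tr 5)).

Definition proto : protocol (seq T * nat) (seq T * nat) nat :=
  Protocol 6 (msg 0) (msg 1) outp outp.

Lemma transcript_eq A B k :
  transcript proto (A, k) (B, k) =
  [:: enc (phrase_len A (pos A k)); enc (phrase_len B (pos B k));
      enc (phrase_src A (pos A k)); enc (phrase_src B (pos B k));
      enc (vv A k (dec (enc (phrase_len B (pos B k)))) (dec (enc (phrase_src B (pos B k)))));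
      enc (vv B k (dec (enc (phrase_len A (pos A k)))) (dec (enc (phrase_src A (pos A k)))))].
Proof. by []. Qed.
End Proto.

Theorem lemma6 :
  exists R c : nat, forall T : eqType,
    exists P : protocol (seq T * nat) (seq T * nat) nat,
      rounds P <= R /\
      forall A B : seq T,
        let k := lcp (lz77 A) (lz77 B) in
        let tr := transcript P (A, k) (B, k) in
        [/\ out_A P (A, k) tr = lcp A B,
            out_B P (B, k) tr = lcp A B &
            comm_cost tr <= c * (trunc_log 2 (lcp A B)).+1].
Proof.
exists 6, 6 => T; exists (proto T); split => // A B k tr.
have EpB : pos B k = pos A k by rewrite /pos /k take_lcp.
have hkA : k <= lcp (lz77 A) (lz77 B) by [].
have E0 : take 0 A = take 0 B by rewrite !take0.
have [Ep hpA] := lz_common E0 (leq0n _) (hkA : k <= lcp (lz_from (size A) 0 A) (lz_from (size B) 0 B)).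
rewrite add0n -/(pos A k) in Ep hpA.
have G3 := g3 Ep.
rewrite -/k in G3.
set p := pos A k in Ep hpA G3 EpB.
set m := lcp (drop p A) (drop p B) in G3.
have El : lcp A B = p + m by rewrite /m -lcp_split.
have hA := phrase_len_src A p; have hB := phrase_len_src B p.
move: hA hB => /andP [hA1 /eqP hA2] /andP [hB1 /eqP hB2].
have vA : vv A k (phrase_len B p) (phrase_src B p) = minn m (phrase_len B p).
  by rewrite /vv -/p (window hB1 Ep) hB2 lcp_take.
have vB : vv B k (phrase_len A p) (phrase_src A p) = minn m (phrase_len A p).
  by rewrite /vv EpB -(window hA1 Ep) hA2 lcp_take lcp_sym.
have Eout : outp (A, k) tr = lcp A B /\ outp (B, k) tr = lcp A B.
  rewrite /outp /tr transcript_eq /= EpB -/p !dec_enc vA vB El.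
  split; congr (_ + _); lia.
case: Eout => E1 E2; split => //.
have hb n : n <= lcp A B -> size (enc n) <= (trunc_log 2 (lcp A B)).+1.
  move=> hn; apply: size_enc; apply: leq_ltn_trans hn _; exact: trunc_log_ltn.
rewrite /comm_cost /tr transcript_eq /= EpB -/p !dec_enc vA vB.
have h1 := hb (phrase_len A p) ltac:(lia).
have h2 := hb (phrase_len B p) ltac:(lia).
have h3 := hb (phrase_src A p) ltac:(lia).
have h4 := hb (phrase_src B p) ltac:(lia).
have h5 := hb (minn m (phrase_len B p)) ltac:(lia).
have h6 := hb (minn m (phrase_len A p)) ltac:(lia).
lia.
Qed.
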